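(* Let $M\ge1$ be an integer, $\lambda>1$, $0\le\varepsilon<\lambda-1$. Let $1\ne u\in F_N$ be such that the orbit ${\rm Out}(F_N)[u]$ contains an $(M,\lambda,\varepsilon)$-minimal conjugacy class. Then every $[u']\in\mathcal M([u])$ is $(M,\lambda,\varepsilon)$-minimal.
   Context: $F_N=F(A)$ is free of rank $N\ge2$ with free basis $A$; $\|g\|_A$ is the cyclically reduced length of $g$ (depends only on $[g]$); ${\rm Out}(F_N)$ acts on conjugacy classes. A class $[w]$ is ${\rm Out}(F_N)$-minimal if $\|w\|_A\le\|\varphi(w)\|_A$ for all $\varphi\in{\rm Out}(F_N)$; $\mathcal M([w])$ is the set of ${\rm Out}(F_N)$-minimal classes in ${\rm Out}(F_N)[w]$. For an integer $M\ge1$, $\lambda>1$, $0\le\varepsilon<\lambda-1$: a finite set $S$ of conjugacy classes of nontrivial elements is $(M,\lambda,\varepsilon)$-minimizing if (1) $\#S\le M$; (2) all elements of $S$ lie in one ${\rm Out}(F_N)$-orbit; (3) for all $[u],[u']\in S$, $1-\varepsilon\le\|u'\|_A/\|u\|_A\le1+\varepsilon$; (4) for every $[u]\in S$ and every $\varphi\in{\rm Out}(F_N)$ with $\varphi([u])\notin S$, $\|\varphi(u)\|_A/\|u\|_A\ge\lambda$. A nontrivial class $[u]$ is $(M,\lambda,\varepsilon)$-minimal if it belongs to some $(M,\lambda,\varepsilon)$-minimizing set. *)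

(* Defs.v *)
(* Concrete model of the free group F_N with free basis
   A = {a_0, ..., a_{N-1}}: elements are words over letters (i, b) with
   i < N, b = true meaning a_i and b = false meaning a_i^{-1}; two words
   represent the same element iff they have the same free reduction. *)
From Stdlib Require Import Reals List Arith Bool.
Import ListNotations.
Open Scope R_scope.

Definition letter := (nat * bool)%type.
Definition word := list letter.

Definition letter_eqb (x y : letter) : bool :=
  Nat.eqb (fst x) (fst y) && Bool.eqb (snd x) (snd y).

Definition inv_letter (x : letter) : letter := (fst x, negb (snd x)).

Definition winv (w : word) : word := rev (map inv_letter w).

Fixpoint red (w : word) : word :=
  match w with
  | [] => []
  | x :: w' =>
      match red w' with
      | y :: r => if letter_eqb y (inv_letter x) then r else x :: y :: r
      | [] => [x]
      end
  end.

Definition valid (N : nat) (w : word) : Prop :=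
  forall x, In x w -> (fst x < N)%nat.

Definition nontrivial (w : word) : Prop := red w <> [].

Fixpoint cred_aux (fuel : nat) (w : word) : word :=
  match fuel with
  | O => w
  | S f =>
      match w with
      | x :: ((_ :: _) as w') =>
          if letter_eqb (last w' x) (inv_letter x)
          then cred_aux f (removelast w')
          else w
      | _ => w
      end
  end.

Definition cyc_reduce (w : word) : word :=
  cred_aux (length (red w)) (red w).

Definition cyc_len (w : word) : nat := length (cyc_reduce w).

Definition conjugate (N : nat) (u v : word) : Prop :=
  exists g : word, valid N g /\ red (g ++ u ++ winv g) = red v.

Definition apply_endo (phi : nat -> word) (w : word) : word :=
  flat_map (fun x : letter => if snd x then phi (fst x) else winv (phi (fst x))) w.

Definition endo (N : nat) (phi : nat -> word) : Prop :=
  forall i, (i < N)%nat -> valid N (phi i).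

Definition is_aut (N : nat) (phi : nat -> word) : Prop :=
  endo N phi /\
  exists psi : nat -> word, endo N psi /\
    (forall i, (i < N)%nat -> red (apply_endo psi (phi i)) = [(i, true)]) /\
    (forall i, (i < N)%nat -> red (apply_endo phi (psi i)) = [(i, true)]).

(* [v] lies in the Out(F_N)-orbit of [u]. Inner automorphisms act trivially
   on conjugacy classes, so the Out-action on classes is computed via Aut. *)
Definition in_orbit (N : nat) (v u : word) : Prop :=
  valid N v /\ exists phi : nat -> word, is_aut N phi /\ conjugate N v (apply_endo phi u).

Definition out_minimal (N : nat) (w : word) : Prop :=
  forall phi, is_aut N phi -> (cyc_len w <= cyc_len (apply_endo phi w))%nat.

Definition class_in (N : nat) (v : word) (S : list word) : Prop :=
  exists s : word, In s S /\ conjugate N v s.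

Definition ratio (a b : word) : R := INR (cyc_len a) / INR (cyc_len b).

(* S (a finite list of representatives, so #S <= length S) is
   (M, lambda, eps)-minimizing *)
Definition minimizing (N M : nat) (lam eps : R) (S : list word) : Prop :=
  (length S <= M)%nat /\
  (forall u, In u S -> valid N u /\ nontrivial u) /\
  (forall u u', In u S -> In u' S -> in_orbit N u' u) /\
  (forall u u', In u S -> In u' S ->
     1 - eps <= ratio u' u /\ ratio u' u <= 1 + eps) /\
  (forall u phi, In u S -> is_aut N phi ->
     ~ class_in N (apply_endo phi u) S ->
     ratio (apply_endo phi u) u >= lam).

Definition MLE_minimal (N M : nat) (lam eps : R) (u : word) : Prop :=
  nontrivial u /\ exists S : list word, minimizing N M lam eps S /\ class_in N u S.

(* Main.v *)
Require Import Defs.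
From Stdlib Require Import Reals List.
From Stdlib Require Import Lia Lra Bool Arith Classical.
Import ListNotations.
Open Scope R_scope.

Lemma leb_reflect x y : reflect (x = y) (letter_eqb x y).
Proof.
  destruct x as [i b], y as [j c]; unfold letter_eqb; simpl.
  destruct (Nat.eqb_spec i j); destruct b, c; simpl; constructor; congruence.
Qed.

Lemma inv_inv x : inv_letter (inv_letter x) = x.
Proof. destruct x; unfold inv_letter; simpl; rewrite negb_involutive; reflexivity. Qed.

Lemma winv_app a b : winv (a ++ b) = winv b ++ winv a.
Proof. unfold winv; rewrite map_app, rev_app_distr; reflexivity. Qed.

Lemma winv_inv a : winv (winv a) = a.
Proof.
  unfold winv; rewrite map_rev, rev_involutive, map_map.
  rewrite (map_ext _ (fun x => x)); [apply map_id| intro; apply inv_inv].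
Qed.

Lemma winv_cons x a : winv (x :: a) = winv a ++ [inv_letter x].
Proof. reflexivity. Qed.

Definition cr (x : letter) (r : word) : word :=
  match r with
  | y :: r' => if letter_eqb y (inv_letter x) then r' else x :: y :: r'
  | [] => [x]
  end.

Lemma red_cons x w : red (x :: w) = cr x (red w).
Proof. simpl. destruct (red w); reflexivity. Qed.

Fixpoint rd (w : word) : Prop :=
  match w with
  | x :: ((y :: _) as t) => y <> inv_letter x /\ rd t
  | _ => True
  end.

Lemma rd_cr x r : rd r -> rd (cr x r).
Proof.
  intros H. destruct r as [|y r']; simpl; auto.
  destruct (leb_reflect y (inv_letter x)).
  - destruct r'; simpl in *; tauto.
  - simpl. split; auto.
Qed.

Lemma rd_red w : rd (red w).
Proof. induction w; [simpl; auto|]. rewrite red_cons. apply rd_cr; auto. Qed.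

Lemma red_rd r : rd r -> red r = r.
Proof.
  induction r as [|x r IH]; intros H; auto.
  rewrite red_cons. destruct r as [|y r']; auto.
  destruct H as [H1 H2]. rewrite IH by auto. simpl.
  destruct (leb_reflect y (inv_letter x)); congruence.
Qed.

Lemma red_red w : red (red w) = red w.
Proof. apply red_rd, rd_red. Qed.

Lemma cr_cancel x r : rd r -> cr x (cr (inv_letter x) r) = r.
Proof.
  intros H. destruct r as [|y r']; simpl.
  - destruct (leb_reflect (inv_letter x) (inv_letter x)); congruence.
  - rewrite inv_inv. destruct (leb_reflect y x).
    + subst. destruct r' as [|z r'']; simpl; auto.
      destruct H as [H1 H2].
      destruct (leb_reflect z (inv_letter x)); congruence.
    + simpl. destruct (leb_reflect (inv_letter x) (inv_letter x)); congruence.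
Qed.

Definition act (a r : word) : word := fold_right cr r a.

Lemma red_app_act a b : red (a ++ b) = act a (red b).
Proof. induction a as [|x a IHa]; [reflexivity|].
  change ((x :: a) ++ b) with (x :: (a ++ b)). rewrite red_cons, IHa. reflexivity. Qed.

Lemma rd_act a r : rd r -> rd (act a r).
Proof. induction a; simpl; auto. intros; apply rd_cr; auto. Qed.

Lemma act_cr x t r : rd r -> act (cr x t) r = cr x (act t r).
Proof.
  intros H. destruct t as [|y t']; simpl; auto.
  destruct (leb_reflect y (inv_letter x)).
  - subst. rewrite cr_cancel; auto. apply rd_act; auto.
  - reflexivity.
Qed.

Lemma act_red a r : rd r -> act (red a) r = act a r.
Proof.
  intros H; induction a as [|x a IHa]; [reflexivity|].
  change (act (x :: a) r) with (cr x (act a r)).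
  rewrite red_cons, act_cr by auto. rewrite IHa; reflexivity.
Qed.

Lemma red_app_r a b : red (a ++ b) = red (a ++ red b).
Proof. rewrite !red_app_act, red_red. reflexivity. Qed.

Lemma red_app_l a b : red (a ++ b) = red (red a ++ b).
Proof. rewrite !red_app_act, act_red; auto. apply rd_red. Qed.

Lemma red_app_cong a a' b b' : red a = red a' -> red b = red b' -> red (a ++ b) = red (a' ++ b').
Proof.
  intros H1 H2. rewrite red_app_l, H1, <- red_app_l, red_app_r, H2, <- red_app_r. reflexivity.
Qed.

Lemma red_nil_r X Y : red Y = [] -> red (X ++ Y) = red X.
Proof. intros H; rewrite red_app_r, H, app_nil_r; reflexivity. Qed.

Lemma red_nil_l X Y : red X = [] -> red (X ++ Y) = red Y.
Proof. intros H; rewrite red_app_l, H; reflexivity. Qed.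

Lemma red_winv_r w : red (w ++ winv w) = [].
Proof.
  induction w as [|x w IH]; auto.
  rewrite winv_cons. simpl app. rewrite red_cons, app_assoc, red_nil_l by auto.
  simpl. destruct (leb_reflect (inv_letter x) (inv_letter x)); congruence.
Qed.

Lemma red_winv_l w : red (winv w ++ w) = [].
Proof. rewrite <- (winv_inv w) at 2. apply red_winv_r. Qed.

Lemma red_winv_cong a b : red a = red b -> red (winv a) = red (winv b).
Proof.
  intros H.
  rewrite <- (red_nil_r (winv a) (b ++ winv b)) by apply red_winv_r.
  rewrite app_assoc, red_nil_l; auto.
  rewrite red_app_r, <- H, <- red_app_r. apply red_winv_l.
Qed.

Lemma cancel_l g b : red (winv g ++ g ++ b) = red b.
Proof. rewrite app_assoc; apply red_nil_l, red_winv_l. Qed.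

Lemma cancel_r g b : red (g ++ winv g ++ b) = red b.
Proof. rewrite app_assoc; apply red_nil_l, red_winv_r. Qed.

Lemma red_pre a c c' : red c = red c' -> red (a ++ c) = red (a ++ c').
Proof. intros; apply red_app_cong; auto. Qed.

Definition img (f : nat -> word) (x : letter) : word :=
  if snd x then f (fst x) else winv (f (fst x)).

Lemma ae_app f a b : apply_endo f (a ++ b) = apply_endo f a ++ apply_endo f b.
Proof. unfold apply_endo; apply flat_map_app. Qed.

Lemma ae_cons f x a : apply_endo f (x :: a) = img f x ++ apply_endo f a.
Proof. reflexivity. Qed.

Lemma img_inv f x : img f (inv_letter x) = winv (img f x).
Proof. destruct x as [i []]; unfold img; simpl; rewrite ?winv_inv; reflexivity. Qed.

Lemma ae_winv f w : apply_endo f (winv w) = winv (apply_endo f w).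
Proof.
  induction w as [|x w IH]; auto.
  rewrite winv_cons, ae_app, IH, !ae_cons, winv_app.
  change (apply_endo f []) with (@nil letter).
  rewrite app_nil_r, img_inv. reflexivity.
Qed.

Lemma ae_cr f x t : red (img f x ++ apply_endo f t) = red (apply_endo f (cr x t)).
Proof.
  destruct t as [|y t']; unfold cr.
  - rewrite ae_cons. reflexivity.
  - destruct (leb_reflect y (inv_letter x)).
    + subst. rewrite ae_cons, img_inv. apply cancel_r.
    + reflexivity.
Qed.

Lemma ae_red f w : red (apply_endo f w) = red (apply_endo f (red w)).
Proof.
  induction w as [|x w IH]; auto.
  rewrite red_cons, <- ae_cr, ae_cons.
  rewrite red_app_r, IH, <- red_app_r. reflexivity.
Qed.

Lemma ae_cong f a b : red a = red b -> red (apply_endo f a) = red (apply_endo f b).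
Proof. intros H; rewrite ae_red, H, <- ae_red; reflexivity. Qed.

Lemma ae_comp f g w :
  apply_endo g (apply_endo f w) = apply_endo (fun i => apply_endo g (f i)) w.
Proof.
  induction w as [|x w IH]; auto.
  rewrite !ae_cons, ae_app, IH. f_equal.
  unfold img. destruct (snd x); auto. apply ae_winv.
Qed.

Lemma ae_id w : apply_endo (fun i => [(i, true)]) w = w.
Proof.
  induction w as [|[i []] w IH]; auto; rewrite ae_cons, IH; reflexivity.
Qed.

Lemma valid_app N a b : valid N a -> valid N b -> valid N (a ++ b).
Proof. unfold valid; intros Ha Hb x Hx; apply in_app_or in Hx; destruct Hx; auto. Qed.

Lemma valid_app_inv N a b : valid N (a ++ b) -> valid N a /\ valid N b.
Proof. unfold valid; split; intros; apply H; apply in_or_app; auto. Qed.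

Lemma valid_winv N a : valid N a -> valid N (winv a).
Proof.
  unfold valid, winv; intros H x Hx. apply in_rev in Hx.
  apply in_map_iff in Hx. destruct Hx as [y [<- Hy]]. simpl. apply H; auto.
Qed.

Lemma valid_ae N f w : endo N f -> valid N w -> valid N (apply_endo f w).
Proof.
  intros Hf Hw x Hx. unfold apply_endo in Hx. apply in_flat_map in Hx.
  destruct Hx as [y [Hy Hx]]. specialize (Hf _ (Hw _ Hy)).
  destruct (snd y); auto. apply valid_winv in Hf; auto.
Qed.

Lemma ae_ext N f g w : (forall i, (i < N)%nat -> red (f i) = red (g i)) -> valid N w ->
  red (apply_endo f w) = red (apply_endo g w).
Proof.
  intros H; induction w as [|x w IH]; intros Hw; auto.
  rewrite !ae_cons. apply red_app_cong.
  - assert (Hx : (fst x < N)%nat) by (apply Hw; left; auto).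
    unfold img; destruct (snd x); auto. apply red_winv_cong; auto.
  - apply IH. intros y Hy; apply Hw; right; auto.
Qed.

Lemma left_inv N f g w :
  (forall i, (i < N)%nat -> red (apply_endo g (f i)) = [(i, true)]) -> valid N w ->
  red (apply_endo g (apply_endo f w)) = red w.
Proof.
  intros H Hw. rewrite ae_comp.
  rewrite (ae_ext N _ (fun i => [(i,true)])).
  - rewrite ae_id; auto.
  - intros i Hi; rewrite H; auto.
  - auto.
Qed.

Lemma is_aut_sym N f : is_aut N f -> exists g, is_aut N g /\
  (forall w, valid N w -> red (apply_endo g (apply_endo f w)) = red w) /\
  (forall w, valid N w -> red (apply_endo f (apply_endo g w)) = red w).
Proof.
  intros [Hf [g [Hg [H1 H2]]]]. exists g. split; [|split].
  - split; auto. exists f; auto.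
  - intros; eapply left_inv; eauto.
  - intros; eapply left_inv; eauto.
Qed.

Lemma ae_single g i : apply_endo g [(i, true)] = g i.
Proof. unfold apply_endo; simpl; apply app_nil_r. Qed.

Lemma is_aut_comp N f g : is_aut N f -> is_aut N g -> is_aut N (fun i => apply_endo f (g i)).
Proof.
  intros Haf Hag.
  destruct (is_aut_sym N f Haf) as [pf [[Hpf _] [Hf1 Hf2]]].
  destruct (is_aut_sym N g Hag) as [pg [[Hpg _] [Hg1 Hg2]]].
  destruct Haf as [Ef _]; destruct Hag as [Eg _].
  split.
  - intros i Hi; apply valid_ae; auto.
  - exists (fun i => apply_endo pg (pf i)). split; [|split].
    + intros i Hi; apply valid_ae; auto.
    + intros i Hi. rewrite <- ae_comp.
      transitivity (red (apply_endo pg (g i))).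
      * apply ae_cong. apply Hf1. apply Eg; auto.
      * rewrite <- (ae_single g i). rewrite Hg1; auto.
        intros x Hx; simpl in Hx; destruct Hx as [<-|[]]; auto.
    + intros i Hi. rewrite <- ae_comp.
      transitivity (red (apply_endo f (pf i))).
      * apply ae_cong. apply Hg2. apply Hpf; auto.
      * rewrite <- (ae_single pf i). rewrite Hf2; auto.
        intros x Hx; simpl in Hx; destruct Hx as [<-|[]]; auto.
Qed.

Definition inner (g : word) : nat -> word := fun i => g ++ [(i, true)] ++ winv g.

Lemma img_inner g x : img (inner g) x = g ++ [x] ++ winv g.
Proof.
  destruct x as [i []]; unfold img, inner; cbn [fst snd]; [reflexivity|].
  rewrite !winv_app, winv_inv, <- app_assoc. reflexivity.
Qed.

Lemma ae_inner g w : red (apply_endo (inner g) w) = red (g ++ w ++ winv g).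
Proof.
  induction w as [|x w IH].
  - simpl. symmetry; apply red_winv_r.
  - rewrite ae_cons, img_inner.
    rewrite (red_app_cong _ (g ++ [x] ++ winv g) _ (g ++ w ++ winv g)); auto.
    rewrite <- !app_assoc. apply red_pre.
    change ((x :: w) ++ winv g) with ([x] ++ (w ++ winv g)).
    apply red_pre. apply cancel_l.
Qed.

Lemma valid_single N i : (i < N)%nat -> valid N [(i, true)].
Proof. intros H x Hx; simpl in Hx; destruct Hx as [<-|[]]; auto. Qed.

Lemma is_aut_inner N g : valid N g -> is_aut N (inner g).
Proof.
  intros Hg.
  assert (E : forall h, valid N h -> endo N (inner h)).
  { intros h Hh i Hi. unfold inner. repeat apply valid_app; auto using valid_winv, valid_single. }
  split; auto. exists (inner (winv g)). split; [|split]; auto using valid_winv.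
  - intros i Hi. rewrite ae_inner. unfold inner. rewrite winv_inv.
    rewrite <- !app_assoc. rewrite cancel_l. rewrite red_nil_r by apply red_winv_l. reflexivity.
  - intros i Hi. rewrite ae_inner. unfold inner. rewrite winv_inv.
    rewrite <- !app_assoc. rewrite cancel_r. rewrite red_nil_r by apply red_winv_r. reflexivity.
Qed.

Lemma conj_refl N a : conjugate N a a.
Proof. exists []. split. intros x []. simpl. rewrite app_nil_r. reflexivity. Qed.

Lemma conj_sym N a b : conjugate N a b -> conjugate N b a.
Proof.
  intros [g [Hg H]]. exists (winv g). split; auto using valid_winv.
  rewrite winv_inv.
  transitivity (red (winv g ++ (g ++ a ++ winv g) ++ g)).
  - apply red_pre. apply red_app_cong; auto.
  - rewrite <- !app_assoc, cancel_l. apply red_nil_r, red_winv_l.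
Qed.

Lemma conj_trans N a b c : conjugate N a b -> conjugate N b c -> conjugate N a c.
Proof.
  intros [g [Hg H1]] [h [Hh H2]]. exists (h ++ g). split; auto using valid_app.
  rewrite <- H2. rewrite winv_app, <- !app_assoc. apply red_pre.
  transitivity (red ((g ++ a ++ winv g) ++ winv h)).
  - rewrite <- !app_assoc; reflexivity.
  - apply red_app_cong; auto.
Qed.

Lemma conj_red_l N a a' b : red a = red a' -> conjugate N a b -> conjugate N a' b.
Proof.
  intros E [g [Hg H]]. exists g. split; auto. rewrite <- H. apply red_pre.
  apply red_app_cong; auto.
Qed.

Lemma conj_red_r N a b b' : red b = red b' -> conjugate N a b -> conjugate N a b'.
Proof. intros E [g [Hg H]]. exists g. split; auto. congruence. Qed.

Lemma conj_endo N f a b : endo N f -> conjugate N a b ->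
  conjugate N (apply_endo f a) (apply_endo f b).
Proof.
  intros Ef [g [Hg H]]. exists (apply_endo f g). split; auto using valid_ae.
  rewrite <- ae_winv, <- !ae_app. apply ae_cong; auto.
Qed.

Lemma cyc_len_red a b : red a = red b -> cyc_len a = cyc_len b.
Proof. intros H; unfold cyc_len, cyc_reduce; rewrite H; reflexivity. Qed.

Lemma final N M lam eps S s th u' : 1 < lam ->
  minimizing N M lam eps S -> In s S -> is_aut N th ->
  red (apply_endo th s) = red u' -> out_minimal N u' ->
  MLE_minimal N M lam eps u'.
Proof.
  intros Hl HS Hs Ha E Hmin.
  pose proof HS as [_ [Hval [_ [_ Hrat]]]].
  destruct (Hval s Hs) as [Vs Ns].
  destruct (is_aut_sym N th Ha) as [ps [Hps [H1 H2]]].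
  assert (Eps : red (apply_endo ps u') = red s).
  { rewrite <- (H1 s Vs). apply ae_cong; auto. }
  destruct (classic (class_in N (apply_endo th s) S)) as [C|C].
  - split.
    + intro Hn. apply Ns. rewrite <- Eps. rewrite (ae_red ps u'), Hn. reflexivity.
    + exists S. split; auto. destruct C as [s2 [Hs2 Hc]]. exists s2. split; auto.
      eapply conj_red_l; eauto.
  - exfalso. specialize (Hrat s th Hs Ha C). unfold ratio in Hrat.
    rewrite (cyc_len_red _ u' E) in Hrat.
    specialize (Hmin ps Hps). rewrite (cyc_len_red _ s Eps) in Hmin.
    apply le_INR in Hmin.
    destruct (Nat.eq_dec (cyc_len s) 0) as [Z|Z].
    + rewrite Z in Hrat, Hmin. simpl in Hmin. unfold Rdiv in Hrat.
      change (INR 0) with 0 in Hrat. rewrite Rinv_0, Rmult_0_r in Hrat. lra.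
    + assert (P : 0 < INR (cyc_len s)) by (apply lt_0_INR; lia).
      apply Rge_le in Hrat. apply (Rmult_le_compat_r (INR (cyc_len s))) in Hrat; [|lra].
      unfold Rdiv in Hrat. rewrite Rmult_assoc, Rinv_l, Rmult_1_r in Hrat by lra.
      nra.
Qed.

Theorem mainTheorem4 (N M : nat) (lam eps : R) (u : word) :
  (2 <= N)%nat -> (1 <= M)%nat -> 1 < lam -> 0 <= eps -> eps < lam - 1 ->
  valid N u -> nontrivial u ->
  (exists v, in_orbit N v u /\ MLE_minimal N M lam eps v) ->
  forall u', in_orbit N u' u -> out_minimal N u' ->
    MLE_minimal N M lam eps u'.
Proof.
  intros HN HM Hl He1 He2 Hu Hnt [v [[Hv [f1 [Ha1 Hc1]]] [Hntv [S [HS [s [Hs Hcs]]]]]]]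
    u' [Hu' [f2 [Ha2 Hc2]]] Hmin.
  pose proof HS as [_ [Hval _]].
  destruct (Hval s Hs) as [Vs Ns].
  destruct (is_aut_sym N f1 Ha1) as [g1 [Hag1 [Hl1 Hr1]]].
  pose (t0 := fun i => apply_endo f2 (g1 i)).
  assert (At0 : is_aut N t0) by (apply is_aut_comp; auto).
  assert (Et0 : endo N t0) by apply At0.
  assert (Ef2 : endo N f2) by apply Ha2.
  assert (Eg1 : endo N g1) by apply Hag1.
  assert (Ht : forall w, apply_endo t0 w = apply_endo f2 (apply_endo g1 w)).
  { intros w. unfold t0. rewrite ae_comp. reflexivity. }
  assert (C1 : conjugate N (apply_endo t0 s) (apply_endo t0 v)).
  { apply conj_endo; auto. apply conj_sym; auto. }
  assert (C2 : conjugate N (apply_endo t0 v) (apply_endo f2 u)).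
  { rewrite Ht. apply conj_endo; auto.
    apply (conj_red_r N _ (apply_endo g1 (apply_endo f1 u))); auto.
    apply conj_endo; auto. }
  assert (C3 : conjugate N (apply_endo t0 s) u').
  { eapply conj_trans; [exact C1|]. eapply conj_trans; [exact C2|]. apply conj_sym; auto. }
  destruct C3 as [g [Hg Hred]].
  apply (final N M lam eps S s (fun i => apply_endo (inner g) (t0 i)) u'); auto.
  - apply is_aut_comp; auto. apply is_aut_inner; auto.
  - rewrite <- ae_comp, ae_inner. auto.
Qed.
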